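(* Let $\Phi$ be a channel matrix whose rows $P^1,\dots,P^4\in\Delta^n$ are in general position, let $Q^0$ be the equidistant point from $P^1,\dots,P^4$ with barycentric coordinate $\boldsymbol\lambda^0$, and suppose $\lambda^0_1<0$, $\lambda^0_2,\lambda^0_3,\lambda^0_4\ge0$. Let $Q^1=\pi(Q^0|L(P^2,P^3,P^4))$ with barycentric coordinate $\boldsymbol\lambda^1$ about $P^1,\dots,P^4$, and suppose $\lambda^1_2<0$, $\lambda^1_3\ge0$, $\lambda^1_4\ge0$. Let $Q^2=\pi(Q^1|L(P^3,P^4))$. Then the output distribution achieving the channel capacity is $Q^\ast=Q^2$ and the channel capacity is $C=D(P^3\|Q^2)$.
   Context: $\Delta^n=\{Q:Q_j>0,\sum_jQ_j=1\}$, $\bar\Delta^m=\{\boldsymbol\lambda:\lambda_i\ge0,\sum_i\lambda_i=1\}$; $D(Q\|Q')=\sum_jQ_j\log(Q_j/Q'_j)$. Rows are in general position if $P^2-P^1,\dots,P^m-P^1$ are linearly independent. $L(S^1,\dots,S^r)=\{\sum_i\lambda_iS^i:\sum_i\lambda_i=1\}\cap\Delta^n$; for such an affine subspace $L$, $\pi(Q'|L)$ is the unique $Q\in L$ minimizing $D(Q\|Q')$. The barycentric coordinate of $Q\in L(P^1,\dots,P^m)$ is the unique $\boldsymbol\lambda$ with $\sum_i\lambda_i=1$, $Q=\sum_i\lambda_iP^i$. The equidistant point is the unique $Q^0\in L(P^1,\dots,P^m)$ with all $D(P^i\|Q^0)$ equal. Mutual information $I(\boldsymbol\lambda,\Phi)=\sum_{i,j}\lambda_iP^i_j\log(P^i_j/Q_j)$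 with $Q=\boldsymbol\lambda\Phi$; capacity $C=\max_{\boldsymbol\lambda\in\bar\Delta^m}I(\boldsymbol\lambda,\Phi)$; the capacity-achieving output distribution is $Q^\ast=\boldsymbol\lambda^\ast\Phi$ for a maximizer $\boldsymbol\lambda^\ast$ (unique). *)

(* Defs.v *)
From HB Require Import structures.
From mathcomp Require Import all_boot all_order all_algebra.
From mathcomp Require Import all_classical all_reals all_analysis.
Set Implicit Arguments. Unset Strict Implicit. Unset Printing Implicit Defensive.
Import Order.TTheory GRing.Theory Num.Theory.
Local Open Scope ring_scope.
Local Open Scope classical_set_scope.

Section Defs.
Variable R : realType.

Definition in_simplex n (Q : 'rV[R]_n) : Prop :=
  (forall j, 0 < Q 0 j) /\ \sum_j Q 0 j = 1.

Definition in_csimplex m (lam : 'rV[R]_m) : Prop :=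
  (forall i, 0 <= lam 0 i) /\ \sum_i lam 0 i = 1.

Definition KL n (Q Q' : 'rV[R]_n) : R :=
  \sum_j Q 0 j * ln (Q 0 j / Q' 0 j).

Definition general_position m n (Phi : 'M[R]_(m.+1, n)) : Prop :=
  row_free (\matrix_(i < m, j < n) (Phi (lift ord0 i) j - Phi ord0 j)).

Definition affL n (S : seq 'rV[R]_n) (Q : 'rV[R]_n) : Prop :=
  (exists lam : 'I_(size S) -> R,
     \sum_i lam i = 1 /\ Q = \sum_i lam i *: S`_i) /\ in_simplex Q.

Definition rows m n (Phi : 'M[R]_(m, n)) : seq 'rV[R]_n :=
  [seq row i Phi | i <- enum 'I_m].

Definition is_proj n (L : 'rV[R]_n -> Prop) (Q' Q : 'rV[R]_n) : Prop :=
  L Q /\ forall Q'', L Q'' -> KL Q Q' <= KL Q'' Q'.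

Definition barycentric m n (Phi : 'M[R]_(m, n)) (lam : 'rV[R]_m) (Q : 'rV[R]_n)
  : Prop :=
  \sum_i lam 0 i = 1 /\ Q = \sum_i lam 0 i *: row i Phi.

Definition equidistant m n (Phi : 'M[R]_(m, n)) (Q : 'rV[R]_n) : Prop :=
  affL (rows Phi) Q /\ forall i k, KL (row i Phi) Q = KL (row k Phi) Q.

Definition mutual_info m n (lam : 'rV[R]_m) (Phi : 'M[R]_(m, n)) : R :=
  let Q := lam *m Phi in
  \sum_i \sum_j lam 0 i * Phi i j * ln (Phi i j / Q 0 j).

Definition capacity m n (Phi : 'M[R]_(m, n)) : R :=
  sup [set mutual_info lam Phi | lam in in_csimplex (m:=m)].

Definition capacity_achieving m n (Phi : 'M[R]_(m, n)) (lam : 'rV[R]_m) : Prop :=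
  in_csimplex lam /\
  forall lam', in_csimplex lam' -> mutual_info lam' Phi <= mutual_info lam Phi.

End Defs.

Definition i1 : 'I_4 := @Ordinal 4 0 erefl.
Definition i2 : 'I_4 := @Ordinal 4 1 erefl.
Definition i3 : 'I_4 := @Ordinal 4 2 erefl.
Definition i4 : 'I_4 := @Ordinal 4 3 erefl.

(* Main.v *)
Require Import Defs.
From HB Require Import structures.
From mathcomp Require Import all_boot all_order all_algebra.
From mathcomp Require Import all_classical all_reals all_analysis.
From mathcomp Require Import lra ring.
Import Order.TTheory GRing.Theory Num.Theory.
Local Open Scope ring_scope.
Set Implicit Arguments. Unset Strict Implicit. Unset Printing Implicit Defensive.

Section Aux.
Variable R : realType.

Lemma ln_le_sub1 (x : R) : 0 < x -> ln x <= x - 1.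
Proof.
move=> x0; have := expR_ge1Dx (ln x); rewrite lnK ?posrE //; lra.
Qed.

Lemma ln_lt_sub1 (x : R) : 0 < x -> x != 1 -> ln x < x - 1.
Proof.
move=> x0 x1; have : ln x != 0 by rewrite ln_eq0.
move=> /expR_gt1Dx; rewrite lnK ?posrE //; lra.
Qed.

Variable n : nat.
Definition pos (Q : 'rV[R]_n) := forall j, 0 < Q 0 j.
Definition LL (A Q Q' : 'rV[R]_n) := \sum_j A 0 j * ln (Q 0 j / Q' 0 j).

Lemma kl_split (A Q Q' : 'rV[R]_n) : pos A -> pos Q -> pos Q' ->
  KL A Q' = KL A Q + LL A Q Q'.
Proof.
move=> pA pQ pQ'; rewrite /KL /LL -big_split /=; apply: eq_bigr => j _.
have a0 := pA j; have q0 := pQ j; have q0' := pQ' j.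
have -> : A 0 j / Q' 0 j = (A 0 j / Q 0 j) * (Q 0 j / Q' 0 j).
  by field; rewrite gt_eqF // gt_eqF.
rewrite lnM ?posrE ?divr_gt0 //; ring.
Qed.

Lemma LL_lin m (c : 'I_m -> R) (A : 'I_m -> 'rV[R]_n) (Q Q' : 'rV[R]_n) :
  LL (\sum_i c i *: A i) Q Q' = \sum_i c i * LL (A i) Q Q'.
Proof.
rewrite /LL; under eq_bigr => j _ do rewrite summxE big_distrl /=.
rewrite exchange_big /=; apply: eq_bigr => i _; rewrite big_distrr /=.
by apply: eq_bigr => j _; rewrite mxE mulrA.
Qed.

Lemma KL_id m (c : 'I_m -> R) (A : 'I_m -> 'rV[R]_n) (Q Q' : 'rV[R]_n) :
  (forall i, pos (A i)) -> pos Q -> pos Q' -> Q = \sum_i c i *: A i ->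
  \sum_i c i * KL (A i) Q' = KL Q Q' + \sum_i c i * KL (A i) Q.
Proof.
move=> pA pQ pQ' HQ.
have -> : KL Q Q' = LL Q Q Q' by [].
rewrite {1}HQ LL_lin -big_split /=; apply: eq_bigr => i _.
by rewrite (kl_split (pA i) pQ pQ'); ring.
Qed.

Lemma KL_self (Q : 'rV[R]_n) : KL Q Q = 0.
Proof.
rewrite /KL big1 // => j _.
have [->|q0] := eqVneq (Q 0 j) 0; first by rewrite mul0r.
by rewrite divff // ln1 mulr0.
Qed.

Definition insimp (Q : 'rV[R]_n) := pos Q /\ \sum_j Q 0 j = 1.

Lemma gibbs (A B : 'rV[R]_n) : insimp A -> insimp B -> 0 <= KL A B.
Proof.
move=> [pA sA] [pB sB].
have : \sum_j (A 0 j - B 0 j) <= KL A B.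
  rewrite /KL; apply: ler_sum => j _.
  have a0 := pA j; have b0 := pB j.
  have h := ln_le_sub1 (divr_gt0 b0 a0).
  have -> : ln (A 0 j / B 0 j) = - ln (B 0 j / A 0 j).
    by rewrite -lnV ?posrE ?divr_gt0 // invf_div.
  have : A 0 j * (B 0 j / A 0 j - 1) = B 0 j - A 0 j by field; rewrite gt_eqF.
  nra.
by rewrite sumrB sA sB subrr.
Qed.

Lemma gibbs_eq (A B : 'rV[R]_n) : insimp A -> insimp B -> KL A B <= 0 -> A = B.
Proof.
move=> [pA sA] [pB sB] H.
have E : forall j, 0 <= A 0 j * ln (A 0 j / B 0 j) - (A 0 j - B 0 j).
  move=> j; have a0 := pA j; have b0 := pB j.
  have h := ln_le_sub1 (divr_gt0 b0 a0).
  have -> : ln (A 0 j / B 0 j) = - ln (B 0 j / A 0 j).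
    by rewrite -lnV ?posrE ?divr_gt0 // invf_div.
  have : A 0 j * (B 0 j / A 0 j - 1) = B 0 j - A 0 j by field; rewrite gt_eqF.
  nra.
have S0 : \sum_j (A 0 j * ln (A 0 j / B 0 j) - (A 0 j - B 0 j)) == 0.
  rewrite eq_le sumr_ge0 ?andbT; last by move=> j _; exact: E.
  by rewrite sumrB -/(KL A B) sumrB sA sB subrr subr0.
move/eqP: S0 => /psumr_eq0P Z.
apply/rowP => j; have a0 := pA j; have b0 := pB j.
have := Z (fun j _ => E j) j isT.
have [u1|u1] := eqVneq (B 0 j / A 0 j) 1.
  by move=> _; rewrite -[RHS](@divfK _ (A 0 j)) ?gt_eqF // u1 mul1r.
have h := ln_lt_sub1 (divr_gt0 b0 a0) u1.
have -> : ln (A 0 j / B 0 j) = - ln (B 0 j / A 0 j).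
  by rewrite -lnV ?posrE ?divr_gt0 // invf_div.
have : A 0 j * (B 0 j / A 0 j - 1) = B 0 j - A 0 j by field; rewrite gt_eqF.
nra.
Qed.

Lemma kl_pert (Q c v : 'rV[R]_n) (e : R) : pos Q -> pos c -> pos (Q + e *: v) ->
  \sum_j v 0 j = 0 ->
  KL (Q + e *: v) c - KL Q c <= e * LL v Q c + e ^+ 2 * \sum_j (v 0 j ^+ 2 / Q 0 j).
Proof.
move=> pQ pc pe sv.
apply: (@le_trans _ _ (\sum_j (e * (v 0 j * ln (Q 0 j / c 0 j))
   + e ^+ 2 * (v 0 j ^+ 2 / Q 0 j) + e * v 0 j))); last first.
  rewrite big_split /= -big_distrr /= sv mulr0 addr0 big_split /= -!big_distrr.
  by [].
rewrite /KL -sumrB; apply: ler_sum => j _.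
have xp := pe j; rewrite !mxE in xp *.
have yp := pQ j; have cp := pc j.
set y := Q 0 j in xp yp *; set x := y + e * v 0 j in xp *.
have -> : x / c 0 j = x / y * (y / c 0 j) by field; rewrite !gt_eqF.
rewrite lnM ?posrE ?divr_gt0 //.
have h1 : x * ln (x / y) <= x * (x / y - 1).
  by apply: ler_wpM2l; [exact: ltW | apply: ln_le_sub1; exact: divr_gt0].
have h2 : x * (x / y - 1) = e * v 0 j + e ^+ 2 * (v 0 j ^+ 2 / y).
  by rewrite /x; field; rewrite gt_eqF.
set L2 := ln (y / c 0 j).
have -> : x * (ln (x / y) + L2) - y * L2 = x * ln (x / y) + e * (v 0 j * L2).
  by rewrite /x; ring.
lra.
Qed.

Lemma zero_of_quad (a K d : R) : 0 < d -> 0 <= K ->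
  (forall e, `|e| < d -> 0 <= e * a + e ^+ 2 * K) -> a = 0.
Proof.
move=> d0 K0 H; apply/eqP; apply: contraT => an0.
have a0 : 0 < `|a| by rewrite normr_gt0.
set t := Num.min (d / 2) (`|a| / (2 * (K + 1))).
have t0 : 0 < t by rewrite lt_min !divr_gt0 //; lra.
have t1 : t <= d / 2 by rewrite ge_min lexx.
have t2 : t <= `|a| / (2 * (K + 1)) by rewrite ge_min lexx orbT.
have t3 : t * (2 * (K + 1)) <= `|a| by rewrite -ler_pdivlMr //; lra.
have tK : t * t * (2 * (K + 1)) <= t * `|a|.
  by rewrite -mulrA; apply: ler_wpM2l => //; exact: ltW.
case: (ltgtP a 0) => [an|ap|/eqP]; last by rewrite (negbTE an0).
- have na : `|a| = - a by rewrite ltr0_norm.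
  have := H t; rewrite gtr0_norm // => /(_ ltac:(lra)); rewrite expr2 => h.
  rewrite na in tK; nra.
- have na : `|a| = a by rewrite gtr0_norm.
  have := H (- t); rewrite normrN gtr0_norm // => /(_ ltac:(lra)).
  rewrite expr2 => h; rewrite na in tK; nra.
Qed.

Lemma exists_delta (f : 'I_n -> R) : (forall j, 0 < f j) ->
  exists2 d, 0 < d & forall j, d <= f j.
Proof.
move=> fp.
suff [d d0 H] : exists2 d, 0 < d & forall j, j \in enum 'I_n -> d <= f j.
  by exists d => // j; apply: H; rewrite mem_enum.
elim: (enum 'I_n) => [|x s [d d0 IH]]; first by exists 1.
exists (Num.min d (f x)); first by rewrite lt_min d0 fp.
move=> j; rewrite inE => /orP [/eqP->|/IH h]; first by rewrite ge_min lexx orbT.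
by rewrite ge_min h.
Qed.


Lemma sum_indZ m (F : 'I_m -> 'rV[R]_n) k : \sum_i (i == k)%:R *: F i = F k.
Proof.
rewrite (bigD1 k) //= eqxx scale1r big1 ?addr0 // => i /negbTE ->.
by rewrite scale0r.
Qed.

Lemma sum_ind m (k : 'I_m) : \sum_i ((i == k)%:R : R) = 1.
Proof. by rewrite (bigD1 k) //= eqxx big1 ?addr0 // => i /negbTE ->. Qed.

Lemma proj_eq (S : seq 'rV[R]_n) (Q' Q : 'rV[R]_n) :
  (forall k : 'I_(size S), in_simplex S`_k) -> pos Q' ->
  is_proj (affL S) Q' Q -> forall k l : 'I_(size S), LL S`_k Q Q' = LL S`_l Q Q'.
Proof.
move=> HS pQ' [[[lam [sl HQ]] [pQ sQ]] Hmin] k l.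
set v := S`_k - S`_l.
have sv : \sum_j v 0 j = 0.
  under eq_bigr do rewrite !mxE.
  by rewrite sumrB (HS k).2 (HS l).2 subrr.
have ha : LL v Q Q' = LL S`_k Q Q' - LL S`_l Q Q'.
  rewrite /LL -sumrB; apply: eq_bigr => j _; rewrite !mxE; ring.
apply/eqP; rewrite -subr_eq0 -ha; apply/eqP.
have [d d0 Hd] := @exists_delta (fun j => Q 0 j / (`|v 0 j| + 1))
  (fun j => divr_gt0 (pQ j) (ltr_wpDl (normr_ge0 _) ltr01)).
apply: (@zero_of_quad _ (\sum_j (v 0 j ^+ 2 / Q 0 j)) d d0).
  by apply: sumr_ge0 => j _; rewrite divr_ge0 ?sqr_ge0 ?ltW.
move=> e he.
have ev j : (Q + e *: v) 0 j = Q 0 j + e * v 0 j by rewrite !mxE.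
have pe : pos (Q + e *: v).
  move=> j; rewrite ev.
  have hj := Hd j; rewrite ler_pdivlMr ?ltr_wpDl ?ltr01 ?normr_ge0 // in hj.
  have h1 := ler_norm (- (e * v 0 j)); rewrite normrN normrM in h1.
  have h2 := normr_ge0 (v 0 j).
  have h4 : `|e| * `|v 0 j| <= d * `|v 0 j|.
    by apply: ler_wpM2r => //; exact: ltW.
  lra.
have hin : affL S (Q + e *: v).
  split; last first.
    split => //; under eq_bigr do rewrite ev.
    by rewrite big_split /= sQ -big_distrr /= sv mulr0 addr0.
  exists (fun i => lam i + e * ((i == k)%:R - (i == l)%:R)); split.
    by rewrite big_split /= sl -big_distrr sumrB !sum_ind subrr; rewrite /= mulr0 addr0.
  under eq_bigr do rewrite scalerDl -scalerA scalerBl.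
  rewrite big_split /= -HQ -scaler_sumr sumrB !sum_indZ.
  by [].
have := Hmin _ hin; have := kl_pert pQ pQ' pe sv.
rewrite mulrC [e ^+ 2 * _]mulrC; lra.
Qed.

End Aux.

Lemma sum4 (V : zmodType) (F : 'I_4 -> V) : \sum_i F i = F i1 + F i2 + F i3 + F i4.
Proof.
rewrite !big_ord_recl big_ord0 addr0 !addrA.
by congr (_ + _ + _ + _); congr F; apply: val_inj.
Qed.

Lemma sum3 (V : zmodType) (F : 'I_3 -> V) :
  \sum_i F i = F (@Ordinal 3 0 isT) + F (@Ordinal 3 1 isT) + F (@Ordinal 3 2 isT).
Proof.
rewrite !big_ord_recl big_ord0 addr0 !addrA.
by congr (_ + _ + _); congr F; apply: val_inj.
Qed.

Lemma sum2 (V : zmodType) (F : 'I_2 -> V) :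
  \sum_i F i = F (@Ordinal 2 0 isT) + F (@Ordinal 2 1 isT).
Proof.
rewrite !big_ord_recl big_ord0 addr0.
by congr (_ + _); congr F; apply: val_inj.
Qed.

Lemma bary_uniq (R : realType) n (Phi : 'M[R]_(4, n)) (c : 'I_4 -> R) :
  general_position Phi -> \sum_i c i = 0 -> \sum_i c i *: row i Phi = 0 ->
  forall i, c i = 0.
Proof.
move=> Hgp sc sP.
set u : 'rV[R]_3 := \row_i c (lift ord0 i).
have hu : u *m (\matrix_(i < 3, j < n) (Phi (lift ord0 i) j - Phi ord0 j)) = 0 *m
    (\matrix_(i < 3, j < n) (Phi (lift ord0 i) j - Phi ord0 j)).
  rewrite mul0mx; apply/rowP => j; rewrite !mxE.
  have h : c ord0 * Phi ord0 j + \sum_(i < 3) c (lift ord0 i) * Phi (lift ord0 i) j = 0.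
    transitivity ((\sum_i c i *: row i Phi) 0 j); last by rewrite sP mxE.
    symmetry; rewrite summxE big_ord_recl !mxE; congr (_ + _); apply: eq_bigr => i _.
    by rewrite !mxE.
  move: sc; rewrite big_ord_recl => sc.
  rewrite (eq_bigr (fun i => c (lift ord0 i) * Phi (lift ord0 i) j
                             - c (lift ord0 i) * Phi ord0 j)); last first.
    by move=> i _; rewrite !mxE mulrBr.
  rewrite sumrB -big_distrl /=.
  have -> : \sum_(i < 3) c (lift ord0 i) = - c ord0 by lra.
  lra.
have u0 := row_free_inj Hgp hu.
have cl : forall i : 'I_3, c (lift ord0 i) = 0.
  by move=> i; have := congr1 (fun M : 'rV[R]_3 => M 0 i) u0; rewrite !mxE.
have c0 : c ord0 = 0.
  by move: sc; rewrite big_ord_recl big1 ?addr0 // => i _; exact: cl.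
move=> i; case: (unliftP ord0 i) => [i'|] ->; [exact: cl | exact: c0].
Qed.


Lemma mi_eq (R : realType) n (Phi : 'M[R]_(4, n)) (lam : 'rV[R]_4) :
  mutual_info lam Phi = \sum_i lam 0 i * KL (row i Phi) (lam *m Phi).
Proof.
rewrite /mutual_info /KL /=; apply: eq_bigr => i _; rewrite big_distrr /=.
by apply: eq_bigr => j _; rewrite !mxE mulrA.
Qed.

Lemma cs_out (R : realType) n (Phi : 'M[R]_(4, n)) (lam : 'rV[R]_4) :
  (forall i, in_simplex (row i Phi)) -> in_csimplex lam -> in_simplex (lam *m Phi).
Proof.
move=> Hrow [l0 sl].
have p i j : 0 < Phi i j by have := (Hrow i).1 j; rewrite mxE.
split.
  move=> j; rewrite !mxE lt_neqAle sumr_ge0 ?andbT; last first.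
    by move=> i _; rewrite mulr_ge0 // ltW.
  apply/negP => /eqP/esym/psumr_eq0P H.
  have {}H := H (fun i _ => mulr_ge0 (l0 i) (ltW (p i j))).
  have : \sum_i lam 0 i = 0.
    apply: big1 => i _; have := H i isT.
    by move/eqP; rewrite mulf_eq0 (gt_eqF (p i j)) orbF => /eqP.
  by rewrite sl => /eqP; rewrite oner_eq0.
under eq_bigr do rewrite !mxE.
rewrite exchange_big /= -sl; apply: eq_bigr => i _; rewrite -big_distrr /=.
have -> : \sum_j Phi i j = 1.
  by rewrite -(Hrow i).2; apply: eq_bigr => j _; rewrite mxE.
by rewrite mulr1.
Qed.

Theorem theorem19 (R : realType) (n : nat) (Phi : 'M[R]_(4, n))
  (Q0 Q1 Q2 : 'rV[R]_n) (lam0 lam1 : 'rV[R]_4) :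
  (forall i, in_simplex (row i Phi)) ->
  general_position Phi ->
  equidistant Phi Q0 ->
  barycentric Phi lam0 Q0 ->
  lam0 0 i1 < 0 -> 0 <= lam0 0 i2 -> 0 <= lam0 0 i3 -> 0 <= lam0 0 i4 ->
  is_proj (affL [:: row i2 Phi; row i3 Phi; row i4 Phi]) Q0 Q1 ->
  barycentric Phi lam1 Q1 ->
  lam1 0 i2 < 0 -> 0 <= lam1 0 i3 -> 0 <= lam1 0 i4 ->
  is_proj (affL [:: row i3 Phi; row i4 Phi]) Q1 Q2 ->
  (exists lam, capacity_achieving Phi lam) /\
  (forall lam, capacity_achieving Phi lam -> lam *m Phi = Q2) /\
  capacity Phi = KL (row i3 Phi) Q2.
Proof.
move=> Hrow Hgp [[_ sQ0] Heq] [sl0 HQ0] l01 l02 l03 l04 Hp1 [sl1 HQ1] l12 l13 l14 Hp2.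
have pP : forall i, pos (row i Phi) := fun i => (Hrow i).1.
have pQ0 : pos Q0 := sQ0.1.
have sQ1 := Hp1.1.2; have sQ2 := Hp2.1.2.
have pQ1 : pos Q1 := sQ1.1.
have pQ2 : pos Q2 := sQ2.1.
have HS1 : forall k : 'I_(size [:: row i2 Phi; row i3 Phi; row i4 Phi]),
    in_simplex [:: row i2 Phi; row i3 Phi; row i4 Phi]`_k.
  by case=> [[|[|[|k]]] hk] //=.
have E1 := proj_eq HS1 pQ0 Hp1.
have e23 := E1 (@Ordinal 3 0 isT) (@Ordinal 3 1 isT).
have e24 := E1 (@Ordinal 3 0 isT) (@Ordinal 3 2 isT).
rewrite /= in e23 e24.
have HS2 : forall k : 'I_(size [:: row i3 Phi; row i4 Phi]),
    in_simplex [:: row i3 Phi; row i4 Phi]`_k.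
  by case=> [[|[|k]] hk] //=.
have e34 := proj_eq HS2 pQ1 Hp2 (@Ordinal 2 0 isT) (@Ordinal 2 1 isT).
rewrite /= in e34.
have [[mu [smu Hmu]] _] := Hp1.1.
have [[ab [sab Hab]] _] := Hp2.1.
set l1 := LL (row i2 Phi) Q1 Q0.
set l2 := LL (row i3 Phi) Q2 Q1.
have F3 : KL Q1 Q0 = l1.
  change (LL Q1 Q1 Q0 = l1); rewrite {1}Hmu LL_lin sum3 /= -e23 -e24 -!mulrDl.
  by rewrite sum3 in smu; rewrite smu mul1r.
have F5 : KL Q2 Q1 = l2.
  change (LL Q2 Q2 Q1 = l2); rewrite {1}Hab LL_lin sum2 /= -e34 -!mulrDl.
  by rewrite sum2 in sab; rewrite sab mul1r.
set C0 := KL (row i1 Phi) Q0.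
have F2 i : KL (row i Phi) Q0 = KL (row i Phi) Q1 + LL (row i Phi) Q1 Q0.
  exact: kl_split.
have F4 i : KL (row i Phi) Q1 = KL (row i Phi) Q2 + LL (row i Phi) Q2 Q1.
  exact: kl_split.
have q2 : KL (row i2 Phi) Q1 = C0 - l1.
  by rewrite /C0 (Heq i1 i2) F2 /l1; ring.
have q3 : KL (row i3 Phi) Q1 = C0 - l1.
  by rewrite /C0 (Heq i1 i3) F2 /l1 e23; ring.
have q4 : KL (row i4 Phi) Q1 = C0 - l1.
  by rewrite /C0 (Heq i1 i4) F2 /l1 e24; ring.
have r3 : KL (row i3 Phi) Q2 = C0 - l1 - l2.
  by rewrite -q3 F4 /l2; ring.
have r4 : KL (row i4 Phi) Q2 = C0 - l1 - l2.
  by rewrite -q4 F4 /l2 e34; ring.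
have c0i i : KL (row i Phi) Q0 = C0 by rewrite /C0 (Heq i1 i).
have l11 : lam1 0 i1 = 0.
  have smu' := smu; have Hmu' := Hmu.
  rewrite sum3 /= in Hmu'; rewrite sum3 in smu'.
  pose nu := [:: 0; mu (@Ordinal 3 0 isT); mu (@Ordinal 3 1 isT); mu (@Ordinal 3 2 isT)].
  have s1 : \sum_i (lam1 0 i - nu`_i) = 0.
    by rewrite sumrB sl1 sum4 /= add0r smu' subrr.
  have s2 : \sum_i (lam1 0 i - nu`_i) *: row i Phi = 0.
    under eq_bigr do rewrite scalerBl.
    by rewrite sumrB -HQ1 sum4 /= scale0r add0r -Hmu' subrr.
  have := @bary_uniq _ _ Phi (fun i => lam1 0 i - nu`_i) Hgp s1 s2 i1.
  by rewrite subr0.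
have g1 : 0 <= l1 by rewrite -F3; exact: gibbs.
have g2 : 0 <= l2 by rewrite -F5; exact: gibbs.
have g12 : 0 <= KL Q1 Q2 by exact: gibbs.
have g02 : 0 <= KL Q0 Q2 by exact: gibbs.
set D := C0 - l1 - l2.
set K1 := KL (row i1 Phi) Q2.
set K2 := KL (row i2 Phi) Q2.
have hK2 : K2 <= D.
  have F6 := @KL_id _ _ _ (fun i => lam1 0 i) (fun i => row i Phi) _ _ pP pQ1 pQ2 HQ1.
  rewrite !sum4 l11 q2 q3 q4 r3 r4 in F6.
  have e : lam1 0 i4 = 1 - lam1 0 i2 - lam1 0 i3 by move: sl1; rewrite sum4 l11; lra.
  rewrite e in F6.
  have hp : lam1 0 i2 * (K2 - D) = KL Q1 Q2 + l2 by rewrite /D /K2; lra.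
  nra.
have hK1 : K1 <= D.
  have F7 := @KL_id _ _ _ (fun i => lam0 0 i) (fun i => row i Phi) _ _ pP pQ0 pQ2 HQ0.
  rewrite !sum4 !c0i r3 r4 in F7.
  have e : lam0 0 i4 = 1 - lam0 0 i1 - lam0 0 i2 - lam0 0 i3 by move: sl0; rewrite sum4; lra.
  rewrite e in F7.
  have hp : lam0 0 i1 * (K1 - D) = KL Q0 Q2 + l1 + l2 - lam0 0 i2 * (K2 - D).
    by rewrite /D /K1 /K2; lra.
  have : lam0 0 i2 * (K2 - D) <= 0 by rewrite mulr_ge0_le0 // subr_le0.
  nra.
have hD : 0 <= D by rewrite /D -r3; exact: gibbs (Hrow i3) sQ2.
have hall : forall i, KL (row i Phi) Q2 <= D.
  case=> [[|[|[|[|k]]]] hk] //.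
  - have -> : Ordinal hk = i1 by apply: val_inj.
    exact: hK1.
  - have -> : Ordinal hk = i2 by apply: val_inj.
    exact: hK2.
  - have -> : Ordinal hk = i3 by apply: val_inj.
    by rewrite r3.
  - have -> : Ordinal hk = i4 by apply: val_inj.
    by rewrite r4.
have d34 : row i3 Phi <> row i4 Phi.
  move=> E.
  pose nu : seq R := [:: 0; 0; 1; -1].
  have s1 : \sum_(i < 4) nu`_i = 0 by rewrite sum4 /=; ring.
  have s2 : \sum_(i < 4) nu`_i *: row i Phi = 0.
    by rewrite sum4 /= !scale0r !add0r E scaleN1r scale1r subrr.
  have := @bary_uniq _ _ Phi (fun i => nu`_i) Hgp s1 s2 i3.
  by move/eqP; rewrite oner_eq0.
set a := ab (@Ordinal 2 0 isT).
set b := ab (@Ordinal 2 1 isT).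
have sab' : a + b = 1 by rewrite sum2 in sab.
have Hab' : Q2 = a *: row i3 Phi + b *: row i4 Phi by rewrite {1}Hab sum2.
have pS2 : forall i : 'I_2, pos [:: row i3 Phi; row i4 Phi]`_i.
  by case=> [[|[|k]] hk] //=.
have ha : 0 <= a.
  have := KL_id pS2 pQ2 (pP i4) Hab.
  rewrite !sum2 /= KL_self r3 r4 -/D => h.
  rewrite leNgt; apply/negP => an.
  have hk : KL (row i3 Phi) (row i4 Phi) <= 0.
    have g := gibbs sQ2 (Hrow i4).
    rewrite -/a -/b mulr0 addr0 in h.
    have e : a * D + b * D = D by rewrite -mulrDl sab' mul1r.
    have : a * KL (row i3 Phi) (row i4 Phi) >= 0 by lra.
    nra.
  exact: d34 (gibbs_eq (Hrow i3) (Hrow i4) hk).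
have hb : 0 <= b.
  have := KL_id pS2 pQ2 (pP i3) Hab.
  rewrite !sum2 /= KL_self r3 r4 -/D => h.
  rewrite leNgt; apply/negP => bn.
  have hk : KL (row i4 Phi) (row i3 Phi) <= 0.
    have g := gibbs sQ2 (Hrow i3).
    rewrite -/a -/b mulr0 add0r in h.
    have e : a * D + b * D = D by rewrite -mulrDl sab' mul1r.
    have : b * KL (row i4 Phi) (row i3 Phi) >= 0 by lra.
    nra.
  exact: d34 (esym (gibbs_eq (Hrow i4) (Hrow i3) hk)).
pose ls : 'rV[R]_4 := \row_(i < 4) [:: 0; 0; a; b]`_i.
have hls : in_csimplex ls.
  split; last by rewrite sum4 !mxE /= !add0r.
  by case=> [[|[|[|[|k]]]] hk]; rewrite mxE //=.
have lsQ : ls *m Phi = Q2.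
  by rewrite mulmx_sum_row sum4 !mxE /= !scale0r !add0r Hab'.
have MIls : mutual_info ls Phi = D.
  by rewrite mi_eq lsQ sum4 !mxE /= !mul0r !add0r r3 r4 -/D -mulrDl sab' mul1r.
have bound : forall lam, in_csimplex lam ->
    mutual_info lam Phi <= D - KL (lam *m Phi) Q2.
  move=> lam hl; have sQ := cs_out Hrow hl.
  have h := @KL_id _ _ _ (fun i => lam 0 i) (fun i => row i Phi) _ _ pP sQ.1 pQ2
    (mulmx_sum_row lam Phi).
  rewrite -mi_eq in h.
  have : \sum_i lam 0 i * KL (row i Phi) Q2 <= D.
    rewrite -[D]mul1r -hl.2 big_distrl /=; apply: ler_sum => i _.
    by apply: ler_wpM2l; [exact: hl.1 | exact: hall].
  lra.
have bound' : forall lam, in_csimplex lam -> mutual_info lam Phi <= D.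
  move=> lam hl; have := bound _ hl; have := gibbs (cs_out Hrow hl) sQ2; lra.
split.
  by exists ls; split => // lam' hl'; rewrite MIls; exact: bound'.
split.
  move=> lam [hl hmax]; apply: gibbs_eq (cs_out Hrow hl) sQ2 _.
  have := hmax _ hls; rewrite MIls; have := bound _ hl; lra.
rewrite r3 -/D /capacity; apply/eqP; rewrite eq_le; apply/andP; split.
  apply: ge_sup; first by exists D; exists ls.
  by move=> x [lam hl <-]; exact: bound'.
apply: ub_le_sup; last by exists ls.
by exists D => x [lam hl <-]; exact: bound'.
Qed.
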